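(* Let $1\le k<n$ and let $\{\mu_\alpha\}_{\alpha\in\mathcal{I}_{nk}}$ be a consistent family of probability measures, $\mu_\alpha\in\mathcal{P}(X_\alpha)$. For $\beta\subseteq\{1,\dots,n\}$ with $|\beta|\le k$ put $\mu_\beta=\mathrm{Pr}_\beta(\mu_\gamma)$ for any $\gamma\in\mathcal{I}_{nk}$ with $\gamma\supseteq\beta$ (well defined by consistency; $\mu_\varnothing$ is the unit mass on the one-point space). Let $\nu_i\in\mathcal{P}(X_i)$, $1\le i\le n$, be arbitrary probability measures. For $|\beta|\le k$ let $\widetilde{\mu}_\beta=\mu_\beta\otimes\bigotimes_{i\notin\beta}\nu_i$, viewed as a measure on $X$ via the identification $X\cong X_\beta\times\prod_{i\notin\beta}X_i$, and for $0\le t\le k$ let $\widetilde{\mu}_t=\sum_{\beta\in\mathcal{I}_{nt}}\widetilde{\mu}_\beta$. Then there exist real numbers $\lambda_0,\dots,\lambda_k$, depending only on $n$ and $k$ (and not on the family $\{\mu_\alpha\}$ nor on the $\nu_i$), such that the finite signed measure $\mu=\sum_{t=0}^k\lambda_t\widetilde{\mu}_t$ satisfies $\mathrm{Pr}_\alpha(\mu)=\mu_\alpha$ for all $\alpha\in\mathcal{I}_{nk}$.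
   Context: $X_1,\dots,X_n$ are Polish spaces with Borel $\sigma$-algebras, $X=\prod_{i=1}^nX_i$. $\mathcal{I}_{nq}$ denotes the family of subsets of $\{1,\dots,n\}$ of cardinality $q$. For $\alpha\subseteq\{1,\dots,n\}$, $X_\alpha=\prod_{i\in\alpha}X_i$, $\mathrm{Pr}_\alpha$ is the coordinate projection onto $X_\alpha$ (from $X$ or from any $X_\gamma$ with $\gamma\supseteq\alpha$), and $x_\alpha=\mathrm{Pr}_\alpha(x)$. $\mathcal{P}(Y)$ is the set of Borel probability measures on $Y$. A family $\{\mu_\alpha\}_{\alpha\in\mathcal{I}_{nk}}$, $\mu_\alpha\in\mathcal{P}(X_\alpha)$, is called consistent if $\mathrm{Pr}_{\alpha\cap\beta}(\mu_\alpha)=\mathrm{Pr}_{\alpha\cap\beta}(\mu_\beta)$ for all $\alpha,\beta\in\mathcal{I}_{nk}$. *)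

(* Defs.v *)
From HB Require Import structures.
From mathcomp Require Import all_boot all_order all_algebra.
From mathcomp Require Import all_classical all_reals all_analysis.

Set Implicit Arguments.
Unset Strict Implicit.
Unset Printing Implicit Defensive.
Import Order.TTheory GRing.Theory Num.Theory.
Local Open Scope classical_set_scope.
Local Open Scope ring_scope.

Definition separable_space (T : topologicalType) : Prop :=
  exists D : set T, countable D /\ closure D = setT.

Definition is_metric (R : realType) (T : Type) (d : T -> T -> R) : Prop :=
  (forall x y, 0 <= d x y) /\ (forall x y, d x y = 0 <-> x = y) /\
  (forall x y, d x y = d y x) /\ (forall x y z, d x z <= d x y + d y z).

Definition metric_generates (R : realType) (T : topologicalType)
  (d : T -> T -> R) : Prop :=
  forall A : set T, open A <->
    (forall x, A x -> exists2 e : R, 0 < e & [set y | d x y < e] `<=` A).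

Definition metric_complete (R : realType) (T : Type) (d : T -> T -> R) : Prop :=
  forall u : nat -> T,
    (forall e : R, 0 < e -> exists N, forall p q, (N <= p)%N -> (N <= q)%N ->
       d (u p) (u q) < e) ->
    exists x, forall e : R, 0 < e -> exists N, forall p, (N <= p)%N -> d (u p) x < e.

Definition polish (R : realType) (T : topologicalType) : Prop :=
  separable_space T /\
  exists d : T -> T -> R, [/\ is_metric d, metric_generates d & metric_complete d].

Section Products.
Variables (n : nat) (T : 'I_n -> ptopologicalType).

Definition Xi (i : 'I_n) := g_sigma_algebraType (@open (T i)).

Definition prodX (a : {set 'I_n}) := forall i : 'I_n, i \in a -> Xi i.

Section PointedProd.
Variable a : {set 'I_n}.
Definition prodX_point : prodX a := fun i _ => (point : T i).
HB.instance Definition _ := isPointed.Build (prodX a) prodX_point.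
End PointedProd.

Definition coord_gen (a : {set 'I_n}) : set (set (prodX a)) :=
  [set S | exists i (h : i \in a) (A : set (Xi i)),
      measurable A /\ S = [set x | A (x i h)]].

Definition PX (a : {set 'I_n}) := g_sigma_algebraType (@coord_gen a).

Definition restr (a b : {set 'I_n}) (sub : b \subset a) : PX a -> PX b :=
  fun x i h => x i ((elimT fintype.subsetP sub) i h).

Definition fullI : {set 'I_n} := finset.setTfor 'I_n.

Definition projX (a : {set 'I_n}) : PX fullI -> PX a :=
  @restr fullI a (finset.subsetT a).

End Products.

Definition consistent (R : realType) (n k : nat) (T : 'I_n -> ptopologicalType)
  (mu : forall a : {set 'I_n}, probability (PX T a) R) : Prop :=
  forall a b : {set 'I_n}, #|a| = k -> #|b| = k ->
  forall B : set (PX T (a :&: b)), measurable B ->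
    mu a (restr (subsetIl a b) @^-1` B) = mu b (restr (subsetIr a b) @^-1` B).

(* m is the product measure mu_beta \otimes \bigotimes_{i \notin beta} nu_i on X,
   where mu_beta = Pr_beta(mu_gamma) for any gamma in I_nk containing beta;
   characterized (uniquely) by its values on measurable rectangles. *)
Definition is_tilde_measure (R : realType) (n k : nat)
  (T : 'I_n -> ptopologicalType)
  (mu : forall a : {set 'I_n}, probability (PX T a) R)
  (nu : forall i : 'I_n, probability (Xi T i) R)
  (b : {set 'I_n}) (m : probability (PX T (fullI n)) R) : Prop :=
  forall g : {set 'I_n}, #|g| = k -> b \subset g ->
  forall A : forall i : 'I_n, set (Xi T i), (forall i, measurable (A i)) ->
    fine (m [set x : PX T (fullI n) | forall i (h : i \in fullI n), A i (x i h)]) =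
    fine (mu g [set y : PX T g | forall i (h : i \in g), i \in b -> A i (y i h)])
    * \prod_(i in ~: b) fine (nu i (A i)).

(* Main.v *)
Require Import Defs.
From HB Require Import structures.
From mathcomp Require Import all_boot all_order all_algebra.
From mathcomp Require Import all_classical all_reals all_analysis.
From mathcomp Require Import zify ring lra.
Import Order.TTheory GRing.Theory Num.Theory.
Local Open Scope ring_scope.
Lemma split_sum (R : nmodType) (k j : nat) (g : nat -> R) : (j <= k)%N ->
  \sum_(t < k.+1 | (j <= t)%N) g t = g j + \sum_(t < k.+1 | (j < t)%N) g t.
Proof.
move=> jk; have jk1 : (j < k.+1)%N by lia.
rewrite (bigD1 (Ordinal jk1)) //=; congr (_ + _).
apply: eq_bigl => t /=; rewrite -val_eqE /=.
by case: (ltngtP j t).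
Qed.

Lemma lam_exists (R : comRingType) (m k : nat) : exists l : nat -> R,
  forall j, (j <= k)%N ->
  \sum_(t < k.+1 | (j <= t)%N) l t * ('C(m, t - j))%:R = (j == k)%:R.
Proof.
suff H : forall d, (d <= k)%N -> exists l : nat -> R,
  forall j, (k - d <= j <= k)%N ->
  \sum_(t < k.+1 | (j <= t)%N) l t * ('C(m, t - j))%:R = (j == k)%:R.
  have [l Hl] := H k (leqnn k); exists l => j jk; apply: Hl; lia.
elim=> [_|d IH dk].
  exists (fun t => (t == k)%:R) => j /andP[j1 j2].
  have -> : j = k by lia.
  rewrite (@split_sum _ _ _ (fun t => (t == k)%:R * ('C(m, t - k))%:R)) // eqxx subnn bin0 mulr1 big1 ?addr0 // => t /= kt.
  by have := ltn_ord t; lia.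
have [l Hl] := IH (ltnW dk).
set j0 := (k - d.+1)%N.
exists (fun t => if t == j0 then (j0 == k)%:R -
   \sum_(t < k.+1 | (j0 < t)%N) l t * ('C(m, t - j0))%:R else l t).
move=> j /andP[j1 j2].
have [->|ne] := eqVneq j j0.
  rewrite (@split_sum _ _ _ (fun t => (if t == j0 then (j0 == k)%:R -
   \sum_(t < k.+1 | (j0 < t)%N) l t * ('C(m, t - j0))%:R else l t) * ('C(m, t - j0))%:R)); last lia.
  rewrite eqxx subnn bin0 mulr1.
  rewrite [X in _ + X](eq_bigr (fun t : 'I_k.+1 => l t * ('C(m, t - j0))%:R)); first by rewrite subrK.
  by move=> t /= jt; have -> : (nat_of_ord t == j0) = false by apply/eqP; lia.
rewrite -Hl; last by apply/andP; split; lia.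
apply: eq_bigr => t /= jt; have -> : (nat_of_ord t == j0) = false by apply/eqP; lia.
by [].
Qed.

Lemma count_sets (n k : nat) (a c : {set 'I_n}) (t : nat) : #|a| = k ->
  c \subset a ->
  #|[set b : {set 'I_n} | (#|b| == t) && (b :&: a == c)]| =
  if (#|c| <= t)%N then 'C(n - k, t - #|c|) else 0%N.
Proof.
move=> ha ca.
case: ifP => ct; last first.
  apply: eq_card0 => b; rewrite !inE.
  apply/negbTE/negP => /andP[/eqP bt /eqP bc].
  have : c \subset b by rewrite -bc subsetIl.
  by move/subset_leq_card; lia.
have -> : [set b : {set 'I_n} | (#|b| == t) && (b :&: a == c)] =
   (fun d : {set 'I_n} => d :|: c) @: [set d : {set 'I_n} | d \subset ~: a & #|d| == (t - #|c|)%N].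
  apply/setP => b; rewrite inE; apply/idP/imsetP.
  - case/andP => /eqP bt /eqP bc; exists (b :\: a).
      by rewrite inE subsetDr /= cardsD bc bt.
    by rewrite -bc; apply/setP => x; rewrite !inE; case: (x \in b); case: (x \in a).
  - case=> d; rewrite inE => /andP[da /eqP dc] ->.
    have dci : d :&: c = finset.set0.
      apply/setP => x; rewrite !inE; apply/negbTE/negP => /andP[xd xc].
      by move/fintype.subsetP: da => /(_ x xd); rewrite inE (fintype.subsetP ca x xc).
    apply/andP; split.
      by rewrite cardsU dci cards0 dc; apply/eqP; lia.
    apply/eqP/setP => x; rewrite !inE.
    case xc: (x \in c); first by rewrite (fintype.subsetP ca x xc) orbT.
    case xa: (x \in a); rewrite ?andbF // andbT orbF.
    by apply/negbTE/negP => xd; move/fintype.subsetP: da => /(_ x xd); rewrite inE xa.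
rewrite card_in_imset; last first.
move=> d1 d2; rewrite !inE => /andP[d1a _] /andP[d2a _] e.
have key : forall d : {set 'I_n}, d \subset ~: a -> d = (d :|: c) :\: a.
  move=> d da; apply/setP => x; rewrite !inE.
  case xd: (x \in d); last first.
    case xc: (x \in c); case xa: (x \in a) => //=.
    by rewrite (fintype.subsetP ca x xc) in xa.
  by move/fintype.subsetP: da => /(_ x xd); rewrite inE => /negbTE ->.
by rewrite (key _ d1a) (key _ d2a) e.
rewrite cards_draws; congr 'C(_, _); have := cardsC a; rewrite card_ord; lia.
Qed.

Lemma comb_main (R : comRingType) n k (a : {set 'I_n}) (l : nat -> R)
  (H : {set 'I_n} -> R) : #|a| = k ->
  (forall j, (j <= k)%N ->
    \sum_(t < k.+1 | (j <= t)%N) l t * ('C(n - k, t - j))%:R = (j == k)%:R) ->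
  \sum_(t < k.+1) l t * \sum_(b : {set 'I_n} | #|b| == t) H (b :&: a) = H a.
Proof.
move=> ha Hl.
have step : forall t : nat, \sum_(b : {set 'I_n} | #|b| == t) H (b :&: a) =
   \sum_(c : {set 'I_n} | c \subset a)
     H c * (if (#|c| <= t)%N then 'C(n - k, t - #|c|) else 0%N)%:R.
  move=> t.
  rewrite (partition_big (fun b : {set 'I_n} => b :&: a) (fun c => c \subset a)) /=;
    last by move=> b _; exact: subsetIr.
  apply: eq_bigr => c ca; rewrite -(count_sets n k a c t ha ca).
  transitivity (\sum_(b in [set b : {set 'I_n} | (#|b| == t) && (b :&: a == c)]) H c).
    by apply: eq_big => b; rewrite ?inE // => /andP[_ /eqP ->].
  by rewrite sumr_const mulr_natr.
have coef : forall c : {set 'I_n}, c \subset a ->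
  \sum_(t < k.+1) l t * (H c * (if (#|c| <= t)%N then 'C(n - k, t - #|c|) else 0%N)%:R)
  = H c * (#|c| == k)%:R.
  move=> c ca; rewrite -Hl; last by rewrite -ha; exact: subset_leq_card.
  rewrite mulr_sumr [RHS]big_mkcond /=; apply: eq_bigr => t _.
  by case: ifP => _; [rewrite mulrCA | rewrite !mulr0].
under eq_bigr do rewrite step mulr_sumr.
rewrite exchange_big /= (eq_bigr _ coef) (bigD1 a) //= ha eqxx mulr1 big1 ?addr0 //.
move=> c /andP[ca ne]; have : c \proper a by rewrite finset.properEneq ne ca.
by move/proper_card; rewrite ha => /ltn_eqF ->; rewrite mulr0.
Qed.

Lemma exists_sup n k (b : {set 'I_n}) : (#|b| <= k)%N -> (k <= n)%N ->
  exists g : {set 'I_n}, #|g| = k /\ b \subset g.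
Proof.
move=> bk kn; move: {2}(k - #|b|)%N (erefl (k - #|b|)%N) => d.
elim: d b bk => [|d IH] b bk e.
  by exists b; split => //; lia.
have : (0 < #|~: b|)%N by have := cardsC b; rewrite card_ord; lia.
rewrite card_gt0 => /set0Pn [i]; rewrite inE => ib.
have ci : #|i |: b| = #|b|.+1 by rewrite cardsU1 ib.
have [g [g1 g2]] := IH (i |: b) ltac:(lia) ltac:(lia).
exists g; split => //; exact: (fintype.subset_trans (subsetU1 i b) g2).
Qed.

Local Open Scope classical_set_scope.
Local Open Scope ring_scope.
Set Implicit Arguments. Unset Strict Implicit. Unset Printing Implicit Defensive.
Import numFieldNormedType.Exports.

Definition rect n (T : 'I_n -> ptopologicalType) (c : {set 'I_n})
  (P : forall i, set (Xi T i)) : set (PX T c) :=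
  [set y | forall i (h : i \in c), P i (y i h)].
Arguments rect {n T} c P.

Lemma rect_meas n (T : 'I_n -> ptopologicalType) (c : {set 'I_n})
  (P : forall i, set (Xi T i)) : (forall i, measurable (P i)) ->
  measurable (rect c P).
Proof.
move=> mP.
suff H : forall s : seq 'I_n, measurable
   [set y : PX T c | forall i, i \in s -> forall h : i \in c, P i (y i h)].
  have -> : rect c P = [set y : PX T c | forall i, i \in enum 'I_n -> forall h : i \in c, P i (y i h)].
    apply/funext => y; apply/propext; split => Hy i.
      by move=> _ h; exact: Hy.
    by move=> h; apply: Hy => //; rewrite mem_enum.
  exact: H.
elim => [|i s IH].
  have -> : [set y : PX T c | forall i0, i0 \in [::] -> forall h : i0 \in c, P i0 (y i0 h)] = setT.
    by apply/funext => y; apply/propext; split => // _ j.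
  exact: measurableT.
have -> : [set y : PX T c | forall i0, i0 \in i :: s -> forall h : i0 \in c, P i0 (y i0 h)]
  = [set y : PX T c | forall h : i \in c, P i (y i h)] `&`
    [set y : PX T c | forall i0, i0 \in s -> forall h : i0 \in c, P i0 (y i0 h)].
  apply/funext => y; apply/propext; split.
    by move=> Hy; split => [h|j js h]; apply: Hy; rewrite inE ?eqxx ?js ?orbT.
  case=> H1 H2 j; rewrite inE => /orP[/eqP ->|js]; [exact: H1|exact: H2].
apply: measurableI => //.
have [hi|hi] : (i \in c) \/ ~~ (i \in c) by case: (i \in c); [left|right].
  have -> : [set y : PX T c | forall h : i \in c, P i (y i h)] = [set y | P i (y i hi)].
    apply/funext => y; apply/propext; split => [H|H h]; first exact: H.
    by rewrite (eq_irrelevance h hi).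
  apply: sub_sigma_algebra; exists i, hi, (P i); split => //.
have -> : [set y : PX T c | forall h : i \in c, P i (y i h)] = setT.
  apply/funext => y; apply/propext; split => // _ h; by rewrite h in hi.
exact: measurableT.
Qed.

Lemma projX_meas n (T : 'I_n -> ptopologicalType) (a : {set 'I_n}) :
  measurable_fun setT (@projX n T a).
Proof.
apply: (@measurability _ _ _ _ setT (@projX n T a) (@coord_gen n T a)) => //.
move=> _ [S [i [h [A [mA ->]]]] <-]; rewrite setTI.
have hT : i \in fullI n by rewrite /fullI inE.
apply: sub_sigma_algebra; exists i, hT, A; split => //.
apply/funext => x; apply/propext; rewrite /projX /restr /=.
by rewrite (eq_irrelevance (elimT fintype.subsetP (finset.subsetT a) i h) hT).
Qed.

Definition rects n (T : 'I_n -> ptopologicalType) (c : {set 'I_n}) :=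
  [set S : set (PX T c) | exists P : forall i, set (Xi T i),
     (forall i, measurable (P i)) /\ S = rect c P].
Arguments rects {n} T c.

Lemma rects_setI n (T : 'I_n -> ptopologicalType) (c : {set 'I_n}) :
  setI_closed (rects T c).
Proof.
move=> _ _ [P [mP ->]] [Q [mQ ->]].
exists (fun i => P i `&` Q i); split; first by move=> i; exact: measurableI.
apply/funext => y; apply/propext; split.
  by case=> H1 H2 i h; split; [exact: H1|exact: H2].
by move=> H; split => i h; have [] := H i h.
Qed.

Lemma rects_gen n (T : 'I_n -> ptopologicalType) (c : {set 'I_n}) :
  @measurable _ (PX T c) = <<s rects T c >>.
Proof.
apply/seteqP; split; last first.
  apply: smallest_sub; first exact: sigma_algebra_measurable.
  by move=> _ [P [mP ->]]; exact: rect_meas.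
apply: smallest_sub; first exact: smallest_sigma_algebra.
move=> _ [i [h [A [mA ->]]]]; apply: sub_sigma_algebra.
exists (fun j => [set z : Xi T j | forall e : j = i, A (eq_rect j (Xi T) z i e)]).
split.
  move=> j; have [eji|ne] := eqVneq j i.
    subst j.
    have -> : [set z : Xi T i | forall e : i = i, A (eq_rect i (Xi T) z i e)] = A.
      apply/funext => z; apply/propext; split => [H|H e]; first exact: (H erefl).
      by rewrite (eq_irrelevance e erefl).
    exact: mA.
  have -> : [set z : Xi T j | forall e : j = i, A (eq_rect j (Xi T) z i e)] = setT.
    by apply/funext => z; apply/propext; split => // _ e; rewrite e eqxx in ne.
  exact: measurableT.
apply/funext => y; apply/propext; split.
  move=> Ay j hj e; subst j.
  by rewrite /= (eq_irrelevance hj h).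
by move=> H; exact: (H i h erefl).
Qed.

Lemma fine_series d (X : measurableType d) (R : realType) (m : probability X R)
  (F : (set X)^nat) : (forall k, measurable (F k)) -> trivIset setT F ->
  (fun N => \sum_(k < N) fine (m (F k))) @ \oo --> fine (m (\bigcup_k F k)).
Proof.
move=> mF tF.
have h := measure_sigma_additive mF tF.
have fin : forall A, measurable A -> m A \is a fin_num by move=> A mA; exact: fin_num_measure.
suff -> : (fun N => \sum_(k < N) fine (m (F k))) =
  (fine \o (fun n => (\sum_(0 <= i < n) m (F i))%E)).
  apply: fine_cvg; rewrite fineK; first exact: h.
  by apply: fin; apply: bigcup_measurable => k _.
apply/funext => N /=; rewrite sum_fine; last by move=> i _; exact: fin.
by rewrite big_mkord.
Qed.

Lemma cvg_bigsum (R : realType) (I : Type) (r : seq I) (P : pred I)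
  (f : I -> nat -> R) (l : I -> R) : (forall i, P i -> f i @ \oo --> l i) ->
  (fun N => \sum_(i <- r | P i) f i N) @ \oo --> \sum_(i <- r | P i) l i.
Proof.
elim: r => [|x r IH] H.
  rewrite big_nil; under eq_fun do rewrite big_nil; exact: cvg_cst.
rewrite big_cons; under eq_fun do rewrite big_cons.
case: ifP => Px; last exact: IH.
apply: cvgD; [exact: H|exact: IH].
Qed.

Lemma px_irrP n (T : 'I_n -> ptopologicalType) (c : {set 'I_n}) (x : PX T c)
  i (Q : set (Xi T i)) (h1 h2 : i \in c) : Q (x i h1) -> Q (x i h2).
Proof. by rewrite (eq_irrelevance h1 h2). Qed.

Definition Hf (R : realType) n (T : 'I_n -> ptopologicalType)
  (mu : forall a : {set 'I_n}, probability (PX T a) R)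
  (nu : forall i : 'I_n, probability (Xi T i) R)
  (a : {set 'I_n}) (P : forall i, set (Xi T i)) (c : {set 'I_n}) : R :=
  fine (mu a (rect a (fun i => [set z | i \in c -> P i z]))) *
  \prod_(i in ~: c) fine (nu i [set z | i \in a -> P i z]).

Lemma nu_setT (R : realType) n (T : 'I_n -> ptopologicalType)
  (nu : forall i : 'I_n, probability (Xi T i) R) (a : {set 'I_n})
  (P : forall i, set (Xi T i)) i : i \notin a ->
  fine (nu i [set z | i \in a -> P i z]) = 1.
Proof.
move=> /negbTE ia.
have -> : [set z | i \in a -> P i z] = setT.
  by apply/funext => z; apply/propext; split => // _; rewrite ia.
by rewrite probability_setT.
Qed.

Lemma Hf_a (R : realType) n (T : 'I_n -> ptopologicalType)
  (mu : forall a : {set 'I_n}, probability (PX T a) R)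
  (nu : forall i : 'I_n, probability (Xi T i) R)
  (a : {set 'I_n}) (P : forall i, set (Xi T i)) :
  Hf mu nu a P a = fine (mu a (rect a P)).
Proof.
rewrite /Hf big1 ?mulr1; last by move=> i; rewrite inE; exact: nu_setT.
congr (fine (mu a _)); apply/funext => y; apply/propext; split.
  by move=> H j hj; exact: (H j hj hj).
by move=> H j hj _; exact: H.
Qed.

Lemma rect_eval (R : realType) n k (T : 'I_n -> ptopologicalType)
  (mu : forall a : {set 'I_n}, probability (PX T a) R)
  (nu : forall i : 'I_n, probability (Xi T i) R)
  (m : probability (PX T (fullI n)) R)
  (a b : {set 'I_n}) (P : forall i, set (Xi T i)) :
  (k < n)%N -> consistent k mu -> #|a| = k -> (#|b| <= k)%N ->
  is_tilde_measure k mu nu b m -> (forall i, measurable (P i)) ->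
  fine (m (@projX n T a @^-1` rect a P)) = Hf mu nu a P (b :&: a).
Proof.
move=> kn hcons ha hb Hm mP.
pose P' := fun i => [set z : Xi T i | i \in a -> P i z].
have mP' : forall i, measurable (P' i).
  move=> i; case ia: (i \in a).
    have -> : P' i = P i.
      by apply/funext => z; apply/propext; rewrite /P' ia; split => [H|H _]; [exact: H|].
    exact: mP.
  have -> : P' i = setT.
    by apply/funext => z; apply/propext; rewrite /P' ia; split.
  exact: measurableT.
have e1 : @projX n T a @^-1` rect a P = rect (fullI n) P'.
  apply/funext => x; apply/propext; split.
    move=> H i hT ia; apply: (@px_irrP n T (fullI n) x i (P i) (elimT fintype.subsetP (finset.subsetT a) i ia) hT).
    exact: (H i ia).
  by move=> H i ia; rewrite /projX /restr; apply: H ia.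
have [g [hg bg]] := exists_sup n k b hb (ltnW kn).
have := Hm g hg bg P' mP'.
change [set x : PX T (fullI n) | forall i (h : i \in fullI n), P' i (x i h)]
  with (rect (fullI n) P').
rewrite -e1 => ->; rewrite /Hf; congr (_ * _).
  pose Z := rect (g :&: a) (fun i => [set z : Xi T i | i \in b -> P i z]).
  have mZ : measurable Z.
    apply: rect_meas => i; case ib: (i \in b).
      have -> : [set z : Xi T i | true -> P i z] = P i.
        by apply/funext => z; apply/propext; split => [H|H _]; [exact: H|].
      exact: mP.
    have -> : [set z : Xi T i | false -> P i z] = setT.
      by apply/funext => z; apply/propext; split.
    exact: measurableT.
  have := hcons g a hg ha Z mZ.
  have -> : restr (subsetIl g a) @^-1` Z =
    [set y : PX T g | forall i (h : i \in g), i \in b -> P' i (y i h)].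
    apply/funext => y; apply/propext; split.
      move=> H i hi ib ia.
      have hga : i \in g :&: a by rewrite inE hi ia.
      exact: (@px_irrP n T g y i (P i) (elimT fintype.subsetP (subsetIl g a) i hga) hi (H i hga ib)).
    move=> H i hga ib; rewrite /restr.
    by apply: H ib _; move: hga; rewrite inE => /andP[].
  have -> : restr (subsetIr g a) @^-1` Z =
    rect a (fun i => [set z | i \in b :&: a -> P i z]).
    apply/funext => y; apply/propext; split.
      move=> H i hi; rewrite inE => /andP[ib _].
      have hga : i \in g :&: a by rewrite inE (fintype.subsetP bg i ib) hi.
      exact: (@px_irrP n T a y i (P i) (elimT fintype.subsetP (subsetIr g a) i hga) hi (H i hga ib)).
    move=> H i hga ib; rewrite /restr; apply: H.
    by move: hga; rewrite !inE ib => /andP[].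
  by move=> ->.
rewrite [LHS]big_mkcond [RHS]big_mkcond; apply: eq_bigr => i _; rewrite !inE.
rewrite /P'; case ib: (i \in b); case ia: (i \in a) => //=.
have -> : [set z : Xi T i | false -> P i z] = setT.
  by apply/funext=> z; apply/propext; split.
by rewrite probability_setT.
Qed.

Theorem mainTheorem1 (R : realType) (n k : nat) :
  (1 <= k)%N -> (k < n)%N ->
  exists lam : 'I_k.+1 -> R,
  forall (T : 'I_n -> ptopologicalType), (forall i, polish R (T i)) ->
  forall mu : forall a : {set 'I_n}, probability (PX T a) R,
  consistent k mu ->
  forall nu : forall i : 'I_n, probability (Xi T i) R,
  forall mt : {set 'I_n} -> probability (PX T (fullI n)) R,
  (forall b : {set 'I_n}, (#|b| <= k)%N -> is_tilde_measure k mu nu b (mt b)) ->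
  forall a : {set 'I_n}, #|a| = k ->
  forall B : set (PX T a), measurable B ->
    \sum_(t < k.+1) lam t *
      \sum_(b : {set 'I_n} | #|b| == t) fine (mt b (@projX n T a @^-1` B))
    = fine (mu a B).
Proof.
move=> k1 kn.
have [l Hl] := lam_exists R (n - k) k.
exists (fun t : 'I_k.+1 => l t).
move=> T _ mu hcons nu mt Hmt a ha B mB.
pose L := fun S : set (PX T a) => \sum_(t < k.+1) l t *
  \sum_(b : {set 'I_n} | #|b| == t) fine (mt b (@projX n T a @^-1` S)).
have mpre : forall S, measurable S -> measurable (@projX n T a @^-1` S).
  by move=> S mS; rewrite -[_ @^-1` _]setTI; exact: (@projX_meas n T a measurableT S mS).
have Lrect : forall P, (forall i, measurable (P i)) ->
    L (rect a P) = fine (mu a (rect a P)).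
  move=> P mP; rewrite /L -(Hf_a mu nu a P).
  rewrite -(comb_main R n k a l (Hf mu nu a P) ha Hl).
  apply: eq_bigr => t _; congr (_ * _); apply: eq_bigr => b /eqP bt.
  have bk : (#|b| <= k)%N by rewrite bt; have := ltn_ord t; lia.
  exact: (rect_eval (k:=k) kn hcons ha bk (Hmt b bk) mP).
have rT : rect a (fun i => @setT (Xi T i)) = setT.
  by apply/funext => y; apply/propext; split.
have LT : L setT = 1.
  by rewrite -rT Lrect ?rT ?probability_setT // => i; exact: measurableT.
have Cfine : forall (d : measure_display) (X : measurableType d)
    (m : probability X R) S, measurable S -> fine (m (~` S)) = 1 - fine (m S).
  move=> d X m S mS; rewrite probability_setC // fineB //.
  exact: fin_num_measure.
change (L B = fine (mu a B)).
apply: (@dynkin_induction _ (PX T a) (rects T a) (fun S => L S = fine (mu a S))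
  (rects_gen T a) (@rects_setI n T a)); last by rewrite -rects_gen.
- by rewrite LT probability_setT.
- by move=> _ [P [mP ->]]; exact: Lrect.
- move=> S mS HS.
  rewrite Cfine // -HS -LT /L -sumrB; apply: eq_bigr => t _.
  rewrite -mulrBr -sumrB; congr (_ * _); apply: eq_bigr => b _.
  have pT : @projX n T a @^-1` setT = setT by apply/funext.
  rewrite -preimage_setC Cfine; last exact: mpre.
  by rewrite pT probability_setT.
- move=> F mF tF HF.
  have tF' : trivIset setT (fun j => @projX n T a @^-1` F j).
    move=> i j _ _ [x [xi xj]]; apply: (tF i j) => //.
    by exists (@projX n T a x).
  have cL : (fun N => \sum_(j < N) L (F j)) @ \oo --> L (\bigcup_j F j).
    have -> : (fun N => \sum_(j < N) L (F j)) = (fun N => \sum_(t < k.+1) l t *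
      \sum_(b : {set 'I_n} | #|b| == t) \sum_(j < N) fine (mt b (@projX n T a @^-1` F j))).
      apply/funext => N; rewrite /L exchange_big /=; apply: eq_bigr => t _.
      by rewrite -mulr_sumr exchange_big.
    rewrite /L preimage_bigcup.
    apply: cvg_bigsum => t _; apply: cvgM; first exact: cvg_cst.
    apply: cvg_bigsum => b _; apply: fine_series; last exact: tF'.
    by move=> j; exact: mpre.
  have cR : (fun N => \sum_(j < N) L (F j)) @ \oo --> fine (mu a (\bigcup_j F j)).
    have -> : (fun N => \sum_(j < N) L (F j)) = (fun N => \sum_(j < N) fine (mu a (F j))).
      by apply/funext => N; apply: eq_bigr => j _; exact: HF.
    exact: fine_series.
  exact: (cvg_unique (@Rhausdorff R) cL cR).
Qed.
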